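(* Let $\beta_1=\frac{p_1}{q_1}>1$ and $\beta_2=\frac{p_2}{q_2}>1$ with $\gcd(p_1,q_1)=\gcd(p_2,q_2)=1$, and suppose $p_1\neq kq_2$ for every $k\in\mathbb{N}$. Write $\frac{p_1}{q_2}=\frac{p}{z}$ with $\gcd(p,z)=1$ (so $z>1$). Then for every $n\ge 1$ there are integers $t_n$ and $m_n\ge 1$ such that $T_{\beta_1\circ\beta_2}^n(1)=\frac{t_n}{m_n z^n}$ and $\gcd(t_n,z)=1$. Consequently the set $O_{T_{\beta_1\circ\beta_2}}(1)$ is infinite.
   Context: For a real number $\gamma>1$ let $T_\gamma:[0,1)\to[0,1)$, $T_\gamma(x)=\gamma x \bmod 1$, and $T_{\beta_1\circ\beta_2}:=T_{\beta_1}\circ T_{\beta_2}$. The value at $1$ is defined as the left limit, $T_{\beta_1\circ\beta_2}(1):=\lim_{x\nearrow1}T_{\beta_1\circ\beta_2}(x)$ (equivalently $T_{\beta_2}(1):=1$ and $T_{\beta_1}(1):=\lim_{x\nearrow 1}T_{\beta_1}(x)$), and $T^n_{\beta_1\circ\beta_2}(1):=T^{n-1}_{\beta_1\circ\beta_2}(T_{\beta_1\circ\beta_2}(1))$ for $n\ge2$. The orbit set is $O_{T_{\beta_1\circ\beta_2}}(1):=\{T^k_{\beta_1\circ\beta_2}(1):k\ge1\}$. *)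

(* Defs.v *)
From HB Require Import structures.
From mathcomp Require Import all_boot all_order all_algebra.
From mathcomp Require Import all_classical all_reals all_analysis.
Set Implicit Arguments. Unset Strict Implicit. Unset Printing Implicit Defensive.
Import Order.TTheory GRing.Theory Num.Theory.
Import numFieldNormedType.Exports.
Local Open Scope classical_set_scope.
Local Open Scope ring_scope.

Definition Tb (R : realType) (g : R) (x : R) : R :=
  g * x - (Num.floor (g * x))%:~R.

Definition Tcomp (R : realType) (b1 b2 : R) (x : R) : R := Tb b1 (Tb b2 x).

Definition Tcomp_at1 (R : realType) (b1 b2 : R) : R :=
  lim (Tcomp b1 b2 x @[x --> (1 : R)^'-]).

Definition Text (R : realType) (b1 b2 : R) (x : R) : R :=
  if x == 1 then Tcomp_at1 b1 b2 else Tcomp b1 b2 x.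

Definition Titer1 (R : realType) (b1 b2 : R) (n : nat) : R :=
  iter n (Text b1 b2) 1.

Definition orbit1 (R : realType) (b1 b2 : R) : set R :=
  [set y | exists k : nat, (1 <= k)%N /\ y = Titer1 b1 b2 k].

(* Main.v *)
Require Import Defs.
From HB Require Import structures.
From mathcomp Require Import all_boot all_order all_algebra.
From mathcomp Require Import all_classical all_reals all_analysis.
From mathcomp Require Import lra zify ring.
Import Order.TTheory GRing.Theory Num.Theory.
Import numFieldNormedType.Exports.
Local Open Scope classical_set_scope.
Local Open Scope ring_scope.

Lemma at1 (R : realType) (b1 b2 : R) : 0 < b1 -> 0 < b2 -> 0 < Tb b2 1 ->
  0 < Tb b1 (Tb b2 1) -> Tcomp_at1 b1 b2 = Tcomp b1 b2 1.
Proof.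
move=> b10 b20; rewrite /Tb mulr1.
set f2 := Num.floor b2; set f1 := Num.floor (b1 * (b2 - f2%:~R)).
move=> h2 h1.
pose g x := b1 * (b2 * x - f2%:~R) - f1%:~R.
have f10 : (0 <= f1%:~R :> R).
  by rewrite ler0z /f1 floor_ge0; apply: mulr_ge0; lra.
set u := f1%:~R / b1.
have hu : b1 * u = f1%:~R by rewrite /u mulrCA divff ?mulr1 // gt_eqF.
have u0 : 0 <= u by rewrite /u divr_ge0 // ltW.
set c := (u + f2%:~R) / b2.
have hc : b2 * c = u + f2%:~R by rewrite /c mulrCA divff ?mulr1 // gt_eqF.
have f2u : b2 < f2%:~R + 1 by have := floorD1_gt b2; rewrite intrD.
have f1u : b1 * (b2 - f2%:~R) < f1%:~R + 1.
  by have := floorD1_gt (b1 * (b2 - f2%:~R)); rewrite intrD.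
have uc : u < b2 - f2%:~R by rewrite -(ltr_pM2l b10) hu; lra.
have c1 : c < 1 by rewrite -(ltr_pM2l b20) hc mulr1; lra.
have near_eq : \forall x \near (1:R)^'-, g x = Tcomp b1 b2 x.
  near=> x.
  have xc : c < x by near: x; exact: nbhs_left_gt.
  have x1 : x < 1 by near: x; exact: nbhs_left_lt.
  have bx1 : b2 * c < b2 * x by rewrite ltr_pM2l.
  have bx2 : b2 * x < b2 * 1 by rewrite ltr_pM2l.
  have ex2 : Num.floor (b2 * x) = f2.
    apply: floor_def; rewrite intrD; apply/andP; split; lra.
  have by1 : b1 * u < b1 * (b2 * x - f2%:~R) by rewrite ltr_pM2l //; lra.
  have by2 : b1 * (b2 * x - f2%:~R) < b1 * (b2 - f2%:~R) by rewrite ltr_pM2l //; lra.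
  rewrite /Tcomp /Tb ex2.
  have ex1 : Num.floor (b1 * (b2 * x - f2%:~R)) = f1.
    apply: floor_def; rewrite intrD; apply/andP; split; lra.
  by rewrite ex1.
have gc : g x @[x --> (1:R)^'-] --> g 1.
  apply: cvg_at_left_filter.
  apply: cvgB; last exact: cvg_cst.
  apply: cvgM; first exact: cvg_cst.
  apply: cvgB; last exact: cvg_cst.
  apply: cvgM; first exact: cvg_cst.
  exact: cvg_id.
rewrite /Tcomp_at1.
have -> : Tcomp b1 b2 1 = g 1 by rewrite /g /Tcomp /Tb !mulr1.
apply: cvg_lim => //.
by apply: cvg_trans gc; apply: near_eq_cvg.
Unshelve. all: by end_near.
Qed.

Lemma fracE (R : realType) (a b : nat) : (0 < b)%N ->
  (a%:R / b%:R : R) - (Num.floor (a%:R / b%:R : R))%:~R = (a %% b)%:R / b%:R.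
Proof.
move=> b0.
have bn : (b%:R : R) != 0 by rewrite pnatr_eq0 -lt0n.
have ha : (a%:R / b%:R : R) = (a %/ b)%:R + (a %% b)%:R / b%:R.
  rewrite {1}(divn_eq a b) natrD natrM mulrDl mulfK //.
have fl : Num.floor (a%:R / b%:R : R) = (a %/ b)%:Z.
  apply: floor_def; rewrite ha intrD /=; apply/andP; split.
    by rewrite lerDl divr_ge0.
  rewrite ltrD2l ltr_pdivrMr ?ltr0n // mul1r ltr_nat ltn_mod //.
by rewrite fl ha /= addrAC subrr add0r.
Qed.

Lemma TbE (R : realType) (a b t D : nat) : (0 < b)%N -> (0 < D)%N ->
  Tb (a%:R / b%:R : R) (t%:R / D%:R) = ((a * t) %% (b * D))%:R / (b * D)%:R.
Proof.
move=> b0 D0; rewrite /Tb mulf_div -!natrM fracE // muln_gt0 b0 D0 //.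
Qed.

Lemma coprime_modz (a M z : nat) : (z %| M)%N -> coprime (a %% M) z = coprime a z.
Proof. by move=> H; rewrite -coprime_modl (modn_dvdm _ H) coprime_modl. Qed.

Lemma Tb_mul (R : realType) (g x g' x' : R) : g * x = g' * x' -> Tb g x = Tb g' x'.
Proof. by rewrite /Tb => ->. Qed.

Section Step.
Variables (R : realType) (p1 q1 p2 q2 p z : nat).
Hypotheses (q10 : (0 < q1)%N) (q20 : (0 < q2)%N) (z0 : (0 < z)%N)
  (cpz : coprime p z) (cp2 : coprime p2 q2) (zq2 : (z %| q2)%N)
  (hz : (p1 * z)%N = (p * q2)%N).

Lemma step1 (t D : nat) : (0 < D)%N -> coprime t z ->
  let s := ((p2 * t) %% (q2 * D))%N in
  Tb (p2%:R / q2%:R : R) (t%:R / D%:R) = s%:R / (q2 * D)%:R /\ coprime s z.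
Proof.
move=> D0 ct s; split; first exact: TbE.
rewrite /s coprime_modz; last exact: dvdn_mulr.
rewrite coprimeMl ct andbT; exact: coprime_dvdr cp2.
Qed.

Lemma step2 (s D : nat) : (0 < D)%N -> coprime s z ->
  let t := ((p * s) %% (q1 * (z * D)))%N in
  Tb (p1%:R / q1%:R : R) (s%:R / (q2 * D)%:R) = t%:R / (q1 * (z * D))%:R
  /\ coprime t z.
Proof.
move=> D0 cs t; split.
  rewrite -TbE ?muln_gt0 ?z0 ?D0 //; apply: Tb_mul.
  rewrite !mulf_div -!natrM; apply/eqP; rewrite eqr_div ?pnatr_eq0 -?lt0n
    ?muln_gt0 ?q10 ?q20 ?z0 ?D0 // -!natrM eqr_nat; apply/eqP.
  have -> : (p1 * s * (q1 * (z * D)) = (p1 * z) * (s * (q1 * D)))%N by ring.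
  by rewrite hz; ring.
rewrite /t coprime_modz; last by apply: dvdn_mull; apply: dvdn_mulr.
by rewrite coprimeMl cpz cs.
Qed.
End Step.

Lemma pos_frac (R : realType) (s D z : nat) : (1 < z)%N -> (0 < D)%N ->
  coprime s z -> 0 < (s%:R / D%:R : R).
Proof.
move=> z1 D0 cs; apply: divr_gt0; last by rewrite ltr0n.
rewrite ltr0n lt0n; apply/negP => /eqP s0; move: cs.
by rewrite s0 /coprime gcd0n => /eqP z1'; rewrite z1' in z1.
Qed.

Theorem lemma4p1 (R : realType) (p1 q1 p2 q2 p z : nat) :
  (0 < q1)%N -> (0 < q2)%N -> (q1 < p1)%N -> (q2 < p2)%N ->
  coprime p1 q1 -> coprime p2 q2 ->
  (forall k : nat, p1 <> (k * q2)%N) ->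
  (0 < z)%N -> coprime p z -> (p1 * z)%N = (p * q2)%N ->
  (forall n : nat, (1 <= n)%N ->
     exists (t : int) (m : nat), (1 <= m)%N /\
       Titer1 (p1%:R / q1%:R : R) (p2%:R / q2%:R) n
         = t%:~R / (m%:R * z%:R ^+ n) /\
       coprimez t z%:Z) /\
  ~ finite_set (orbit1 (p1%:R / q1%:R : R) (p2%:R / q2%:R)).
Proof.
move=> q10 q20 qp1 qp2 c1 c2 nk z0 cpz hz.
have z1 : (1 < z)%N.
  case: z z0 hz cpz => [//|[|z']] _ hz _ //.
  by exfalso; apply: (nk p); rewrite -hz muln1.
have zq2 : (z %| q2)%N.
  have czp : coprime z p by rewrite coprime_sym.
  have : (z %| p * q2)%N by rewrite -hz dvdn_mull.
  by rewrite mulnC (Gauss_dvdl _ czp).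
set b1 := (p1%:R / q1%:R : R); set b2 := (p2%:R / q2%:R : R).
have p10 : (0 < p1)%N by apply: leq_trans qp1.
have p20 : (0 < p2)%N by apply: leq_trans qp2.
have b10 : 0 < b1 by rewrite divr_gt0 ?ltr0n.
have b20 : 0 < b2 by rewrite divr_gt0 ?ltr0n.
have one : (1 : R) = 1%:R / 1%:R by rewrite divr1.
have [e2 cs] := step1 R p2 q2 z q20 c2 zq2 1 1 (ltn0Sn 0) (coprime1n z).
have [e1 ct] := step2 R p1 q1 q2 p z q10 q20 z0 cpz hz _ 1 (ltn0Sn 0) cs.
have hat1 : Tcomp_at1 b1 b2 = Tcomp b1 b2 1.
  apply: at1 => //.
    by rewrite one e2; apply: pos_frac z1 _ cs; rewrite muln_gt0 q20.
  by rewrite one e2 e1; apply: pos_frac z1 _ ct; rewrite !muln_gt0 q10 z0.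
have hT : Text b1 b2 = Tcomp b1 b2.
  by apply: funext => x; rewrite /Text; case: eqP => [->|//]; rewrite hat1.
have hI : forall n, Titer1 b1 b2 n = iter n (Tcomp b1 b2) 1.
  by move=> n; rewrite /Titer1 hT.
have inv : forall n, exists t : nat,
    iter n (Tcomp b1 b2) 1 = t%:R / (q1 ^ n * z ^ n)%N%:R /\ coprime t z.
  elim => [|n [t [ht ct']]].
    by exists 1%N; rewrite /= muln1 divr1 coprime1n.
  have D0 : (0 < q1 ^ n * z ^ n)%N by rewrite muln_gt0 !expn_gt0 q10 z0.
  have [f2 cs'] := step1 R p2 q2 z q20 c2 zq2 _ _ D0 ct'.
  have [f1 ct''] := step2 R p1 q1 q2 p z q10 q20 z0 cpz hz _ _ D0 cs'.
  eexists; split; last exact: ct''.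
  rewrite iterS ht /Tcomp f2 f1; congr (_ / _%:R).
  by rewrite !expnS; ring.
split.
  move=> n _; have [t [ht ct']] := inv n.
  exists (Posz t), (q1 ^ n)%N; split; first by rewrite expn_gt0 q10.
  split; last by rewrite coprimezE.
  by rewrite hI ht natrM !natrX.
have key : forall n k, (n < k)%N -> Titer1 b1 b2 n <> Titer1 b1 b2 k.
  move=> n k nk' E; move: E; rewrite !hI.
  have [tn [-> ctn]] := inv n; have [tk [-> ctk]] := inv k.
  have An : (0 < q1 ^ n * z ^ n)%N by rewrite muln_gt0 !expn_gt0 q10 z0.
  have Ak : (0 < q1 ^ k * z ^ k)%N by rewrite muln_gt0 !expn_gt0 q10 z0.
  move/eqP; rewrite eqr_div ?pnatr_eq0 -?lt0n // -!natrM eqr_nat => /eqP E.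
  have hk : (q1 ^ k * z ^ k = (q1 ^ n * z ^ n) * (q1 * z) ^ (k - n))%N.
    by rewrite -!expnMn -expnD subnKC // ltnW.
  rewrite hk mulnA [in RHS]mulnC in E.
  have E' : (tk = tn * (q1 * z) ^ (k - n))%N.
    by apply/eqP; rewrite -(eqn_pmul2l An) -E; apply/eqP; ring.
  have : (z %| tk)%N.
    by rewrite E'; apply: dvdn_mull; apply: dvdn_exp; [rewrite subn_gt0 | exact: dvdn_mull].
  move=> ztk; have : (z %| gcdn tk z)%N by rewrite dvdn_gcd ztk dvdnn.
  by rewrite (eqP ctk) dvdn1 => /eqP z1'; rewrite z1' in z1.
move=> fin.
pose f := fun n : nat => Titer1 b1 b2 n.+1.
have finj : {in f @^-1` orbit1 b1 b2 &, injective f}.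
  move=> i j _ _ E; case: (ltngtP i j) => // h.
    by exfalso; apply: (key i.+1 j.+1); rewrite ?ltnS.
  by exfalso; apply: (key j.+1 i.+1); rewrite ?ltnS.
have := finite_preimage finj fin.
have -> : f @^-1` orbit1 b1 b2 = setT.
  by apply/seteqP; split => // n _; exists n.+1.
exact: infinite_nat.
Qed.
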